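(* Let $\gamma>0$, let $\mathbf{b},\tilde{\mathbf{b}}\in\mathbb{R}^m$, and let $\mathbf{u}^*_\gamma$ and $\tilde{\mathbf{u}}^*_\gamma$ be solutions of the stabilized-regularized system $$\big((\mathbf{I}+\gamma\mathbf{A}^t\mathbf{A})\mathbf{A}^t\mathbf{A}+\gamma\mathbf{L}^t\mathbf{L}\big)\mathbf{u}=(\mathbf{I}+\gamma\mathbf{A}^t\mathbf{A})\mathbf{A}^t\mathbf{c}+\gamma\mathbf{L}^t\mathbf{g}$$ with right-hand data $\mathbf{c}=\mathbf{b}$ and $\mathbf{c}=\tilde{\mathbf{b}}$ respectively (same $\mathbf{A},\mathbf{L},\mathbf{g}$). Then $$\|\mathbf{A}\mathbf{u}^*_\gamma-\mathbf{A}\tilde{\mathbf{u}}^*_\gamma\|_m\le\|(\mathbf{I}+\gamma\mathbf{A}\mathbf{A}^t)(\mathbf{b}-\tilde{\mathbf{b}})\|_m.$$ Moreover, if $m\ge n$ and $\mathbf{A}$ has full column rank $n$, then $$\|\mathbf{u}^*_\gamma-\tilde{\mathbf{u}}^*_\gamma\|_n\le\frac{1}{\sqrt{\lambda_n}}\|(\mathbf{I}+\gamma\mathbf{A}\mathbf{A}^t)(\mathbf{b}-\tilde{\mathbf{b}})\|_m,$$ where $\lambda_n>0$ is the smallest eigenvalue of $\mathbf{A}^t\mathbf{A}$.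
   Context: $\mathbf{A}\in\mathbb{R}^{m\times n}$, $\mathbf{L}\in\mathbb{R}^{p\times n}$, $\mathbf{g}\in\mathbb{R}^p$, $\mathbf{I}$ denotes identity matrices of appropriate size, $\|\cdot\|_m,\|\cdot\|_n$ are Euclidean norms. The displayed system is the normal equation of minimizing $\mathcal{J}_\gamma(\mathbf{v})=\tfrac12\|\mathbf{A}\mathbf{v}-\mathbf{c}\|_m^2-\tfrac12\|\mathbf{c}\|_m^2+\frac{\gamma}{2}\|\mathbf{A}^t\mathbf{A}\mathbf{v}-\mathbf{A}^t\mathbf{c}\|_n^2+\frac{\gamma}{2}\|\mathbf{L}\mathbf{v}-\mathbf{g}\|_p^2$ over $\mathbb{R}^n$, with $\|\cdot\|_p$ the Euclidean norm on $\mathbb{R}^p$. *)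

(* Defs.v *)
From HB Require Import structures.
From mathcomp Require Import all_boot all_order all_algebra.
Set Implicit Arguments. Unset Strict Implicit. Unset Printing Implicit Defensive.
Import Order.TTheory GRing.Theory Num.Theory.
Local Open Scope ring_scope.

Definition enorm (R : rcfType) (k : nat) (v : 'cV[R]_k) : R :=
  Num.sqrt (\sum_(i < k) (v i 0) ^+ 2).

Definition solves_stab_reg (R : rcfType) (m n p : nat)
  (A : 'M[R]_(m, n)) (L : 'M[R]_(p, n)) (gv : 'cV[R]_p) (gamma : R)
  (c : 'cV[R]_m) (u : 'cV[R]_n) : Prop :=
  ((1%:M + gamma *: (A^T *m A)) *m (A^T *m A) + gamma *: (L^T *m L)) *m u
  = (1%:M + gamma *: (A^T *m A)) *m (A^T *m c) + gamma *: (L^T *m gv).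

Definition smallest_eigenvalue (R : rcfType) (n : nat) (M : 'M[R]_n) (lam : R) : Prop :=
  eigenvalue M lam /\ (forall mu, eigenvalue M mu -> lam <= mu).

(* Main.v *)
Require Import Defs.
From HB Require Import structures.
From mathcomp Require Import all_boot all_order all_algebra.
From mathcomp Require Import lra.
From mathcomp Require Import complex.
Import Order.TTheory GRing.Theory Num.Theory.
Local Open Scope ring_scope.

Local Open Scope sesquilinear_scope.

Lemma rowfree_row (F : fieldType) n (P : 'M[F]_n) j : row_free P -> row j P != 0.
Proof.
move=> Pf; rewrite rowE mulmx_free_eq0 //; apply/eqP => /matrixP /(_ 0 j).
by rewrite !mxE !eqxx /= => /eqP; rewrite oner_eq0.
Qed.

Lemma psd_min_eig (R : rcfType) n (B : 'M[R]_n) (lam : R) :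
  B^T = B -> (forall mu, eigenvalue B mu -> lam <= mu) ->
  forall x : 'cV[R]_n, lam * (x^T *m x) 0 0 <= (x^T *m B *m x) 0 0.
Proof.
move=> Bsym Hmin x.
pose toC := real_complex R.
pose Bc := map_mx toC B.
have Bcsym : Bc \is symmetricmx.
  by apply/is_hermitianmxP; rewrite expr0 scale1r map_mx_id // /Bc map_trmx Bsym.
have Bcreal : Bc \is a mxOver Num.real.
  by apply/mxOverP => i j; rewrite mxE /toC complex_real.
have Bch := realsym_hermsym Bcsym Bcreal.
pose P := spectralmx Bc; pose X := spectral_diag Bc.
have PU : P \is unitarymx by apply: spectral_unitarymx.
have Punit : P \in unitmx by apply: unitarymx_unit.
have BcE : Bc = P^t* *m diag_mx X *m P.
  by rewrite -invmx_unitary //; apply/orthomx_spectralP/hermitian_normalmx.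
have Xreal := hermitian_spectral_diag_real Bch.
have PPt : P *m P^t* = 1%:M by apply/eqP; move/unitarymxP: PU => ->.
have PtP : P^t* *m P = 1%:M by rewrite -invmx_unitary // mulVmx.
have Xge : forall j, lam%:C%C <= X 0 j.
  move=> j; have /complex_realP [k Hk] : X 0 j \is Num.real by move/mxOverP: Xreal.
  rewrite Hk lecR; apply: Hmin.
  have : eigenvalue Bc (X 0 j).
    apply/eigenvalueP; exists (row j P).
      rewrite BcE !mulmxA -row_mul PPt -row_mul mul1mx -row_mul mul_diag_mx.
      by apply/rowP => k'; rewrite !mxE.
    by apply: rowfree_row; rewrite row_free_unit.
  by rewrite Hk !eigenvalue_root_char -map_char_poly fmorph_root.
pose v := (map_mx toC x)^T.
have vt : v^t* = map_mx toC x.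
  by apply/matrixP => i j; rewrite !mxE conj_Creal // complex_real.
pose w := v *m P^t*.
have wt : w^t* = P *m v^t* by rewrite /w trmx_mul map_mxM trmxCK.
rewrite -lecR.
have -> : ((x^T *m B *m x) 0 0)%:C%C = (w *m diag_mx X *m w^t*) 0 0.
  rewrite wt /w; have -> : v *m P^t* *m diag_mx X *m (P *m v^t*) = v *m Bc *m v^t* by rewrite BcE !mulmxA.
  by rewrite vt /v /Bc map_trmx -!map_mxM [RHS]mxE.
have -> : (lam * (x^T *m x) 0 0)%:C%C = lam%:C%C * (w *m w^t*) 0 0.
  have -> : w *m w^t* = v *m v^t* by rewrite wt /w mulmxA -(mulmxA v) PtP mulmx1.
  by rewrite vt /v map_trmx -map_mxM [in RHS]mxE rmorphM.
rewrite mul_mx_diag !mxE mulr_sumr; apply: ler_sum => j _; rewrite !mxE.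
set a := (\sum_(j0 < n) _).
rewrite [X in _ <= X]mulrAC [X in _ <= X]mulrC.
by apply: ler_wpM2r; [exact: mul_conjC_ge0 | exact: Xge].
Qed.

Local Close Scope sesquilinear_scope.

Definition sqn {R : rcfType} {k : nat} (v : 'cV[R]_k) : R := (v^T *m v) 0 0.

Lemma sqnE {R : rcfType} {k : nat} (v : 'cV[R]_k) : sqn v = \sum_(i < k) (v i 0) ^+ 2.
Proof. by rewrite /sqn mxE; apply: eq_bigr => i _; rewrite mxE expr2. Qed.

Lemma enormE {R : rcfType} {k : nat} (v : 'cV[R]_k) : enorm v = Num.sqrt (sqn v).
Proof. by rewrite sqnE. Qed.

Lemma sqn_ge0 {R : rcfType} {k : nat} (v : 'cV[R]_k) : 0 <= sqn v.
Proof. by rewrite sqnE; apply: sumr_ge0 => i _; apply: sqr_ge0. Qed.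

Lemma sqn_eq0 {R : rcfType} {k : nat} (v : 'cV[R]_k) : sqn v = 0 -> v = 0.
Proof.
rewrite sqnE => /eqP; rewrite psumr_eq0; last by move=> i _; apply: sqr_ge0.
move=> /allP H; apply/matrixP => i j; rewrite ord1 mxE.
by have /(_ (mem_index_enum i)) := H i; rewrite implyTb sqrf_eq0 => /eqP.
Qed.

Lemma tr11 {R : rcfType} {k : nat} (x y : 'cV[R]_k) : (x^T *m y) 0 0 = (y^T *m x) 0 0.
Proof. by rewrite -[in LHS](trmxK y) -trmx_mul mxE. Qed.

Lemma sqnB {R : rcfType} {k : nat} (x y : 'cV[R]_k) :
  sqn (x - y) = sqn x - 2 * (y^T *m x) 0 0 + sqn y.
Proof.
rewrite /sqn; have -> : (x - y)^T = x^T - y^T by apply/matrixP => i j; rewrite !mxE.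
rewrite /sqn mulmxBl !mulmxBr.
rewrite [x^T *m y]mx11_scalar [y^T *m x]mx11_scalar (tr11 y x).
move: (x^T *m x) (y^T *m y) ((x^T *m y) 0 0) => X Y s.
rewrite !mxE !eqxx !mulr1n.
by rewrite mulr2n mulrDl mul1r; lra.
Qed.



Lemma key_eq (R : rcfType) (m n p : nat)
  (A : 'M[R]_(m, n)) (L : 'M[R]_(p, n)) (gv : 'cV[R]_p) (gamma : R)
  (b bt : 'cV[R]_m) (u ut : 'cV[R]_n) :
  solves_stab_reg A L gv gamma b u ->
  solves_stab_reg A L gv gamma bt ut ->
  ((1%:M + gamma *: (A^T *m A)) *m (A^T *m A) + gamma *: (L^T *m L)) *m (u - ut)
  = A^T *m ((1%:M + gamma *: (A *m A^T)) *m (b - bt)).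
Proof.
rewrite /solves_stab_reg => H1 H2.
rewrite mulmxBr H1 H2 opprD addrACA subrr addr0 -mulmxBr -mulmxBr !mulmxA; congr (_ *m _).
by rewrite mulmxDl mulmxDr mulmx1 mul1mx -!scalemxAl -!scalemxAr !mulmxA.
Qed.

Lemma e00D {R : rcfType} (X Y : 'M[R]_1) : (X + Y) 0 0 = X 0 0 + Y 0 0.
Proof. by rewrite mxE. Qed.
Lemma e00Z {R : rcfType} (a : R) (X : 'M[R]_1) : (a *: X) 0 0 = a * X 0 0.
Proof. by rewrite mxE. Qed.

Lemma sq_bound (R : rcfType) (m n p : nat)
  (A : 'M[R]_(m, n)) (L : 'M[R]_(p, n)) (gamma : R) (d : 'cV[R]_n) (f : 'cV[R]_m) :
  0 <= gamma ->
  ((1%:M + gamma *: (A^T *m A)) *m (A^T *m A) + gamma *: (L^T *m L)) *m d = A^T *m f ->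
  sqn (A *m d) <= sqn f.
Proof.
move=> g0 H.
have E1 : d^T *m (((1%:M + gamma *: (A^T *m A)) *m (A^T *m A) + gamma *: (L^T *m L)) *m d)
   = (A *m d)^T *m (A *m d) + gamma *: ((A^T *m A *m d)^T *m (A^T *m A *m d))
     + gamma *: ((L *m d)^T *m (L *m d)).
  rewrite !trmx_mul !trmxK !mulmxDl !mulmxDr !mul1mx.
  rewrite -?scalemxAl -?scalemxAr -?scalemxAl -?scalemxAr -?scalemxAl -?scalemxAr.
  by rewrite !mulmxA.
have E := congr1 (fun M : 'M[R]_1 => M 0 0) E1; rewrite /= !e00D !e00Z in E.
rewrite H mulmxA -trmx_mul in E.
have := sqnB f (A *m d); have := sqn_ge0 (f - A *m d).
have := sqn_ge0 (A^T *m A *m d); have := sqn_ge0 (L *m d).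
rewrite tr11 /sqn in E *. nra.
Qed.

Lemma sqrt_le {R : rcfType} (a b : R) : 0 <= b -> a <= b -> Num.sqrt a <= Num.sqrt b.
Proof. by move=> hb hab; rewrite ler_sqrt. Qed.

Arguments key_eq {R m n p A L gv gamma b bt u ut}.
Arguments sq_bound {R m n p A L gamma d f}.
Arguments psd_min_eig {R n B lam}.

Theorem theorem3 (R : rcfType) (m n p : nat)
  (A : 'M[R]_(m, n)) (L : 'M[R]_(p, n)) (gv : 'cV[R]_p) (gamma : R)
  (b bt : 'cV[R]_m) (u ut : 'cV[R]_n) :
  0 < gamma ->
  solves_stab_reg A L gv gamma b u ->
  solves_stab_reg A L gv gamma bt ut ->
  enorm (A *m u - A *m ut) <= enorm ((1%:M + gamma *: (A *m A^T)) *m (b - bt))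
  /\
  ((n <= m)%N -> \rank A = n ->
   forall lam : R, smallest_eigenvalue (A^T *m A) lam ->
   enorm (u - ut) <= (Num.sqrt lam)^-1 * enorm ((1%:M + gamma *: (A *m A^T)) *m (b - bt))).
Proof.
move=> g0 H1 H2.
have Hd := key_eq H1 H2.
set f := ((1%:M + gamma *: (A *m A^T)) *m (b - bt)) in Hd *.
have Hsq := sq_bound (ltW g0) Hd.
split.
  rewrite -mulmxBr !enormE. refine (@sqrt_le R _ _ _ _); [exact: sqn_ge0 | exact: Hsq].
move=> _ rk lam [eig minl].
have Bsym : (A^T *m A)^T = A^T *m A by rewrite trmx_mul trmxK.
have Hpsd := psd_min_eig Bsym minl (u - ut).
have E : ((u - ut)^T *m (A^T *m A) *m (u - ut)) 0 0 = sqn (A *m (u - ut)).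
  by rewrite /sqn trmx_mul !mulmxA.
rewrite E in Hpsd.
move/eigenvalueP: eig => [v Hv vn0].
have Hq : sqn (A *m v^T) = lam * sqn v^T.
  rewrite /sqn trmx_mul !trmxK mulmxA -(mulmxA v) Hv -scalemxAl.
  by rewrite e00Z.
have vpos : 0 < sqn v^T.
  rewrite lt_def sqn_ge0 andbT; apply/eqP => /sqn_eq0 /eqP.
  by rewrite trmx_eq0; apply/negP.
have lam0 : 0 < lam.
  have lge : 0 <= lam.
    have := sqn_ge0 (A *m v^T); rewrite Hq => h; nra.
  rewrite lt_def lge andbT; apply/eqP => l0.
  move: Hq; rewrite l0 mul0r => /sqn_eq0 /(congr1 trmx).
  rewrite trmx_mul trmxK trmx0 => /eqP.
  rewrite mulmx_free_eq0; first by apply/negP.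
  by rewrite /row_free mxrank_tr rk.
have lamge : 0 <= lam by exact: ltW.
rewrite !enormE -sqrtrV // -sqrtrM ?invr_ge0 //; refine (@sqrt_le R _ _ _ _).
  by apply: mulr_ge0; rewrite ?invr_ge0 ?sqn_ge0.
rewrite -(ler_pM2l lam0) mulrA mulfV ?gt_eqF // mul1r.
by apply: le_trans Hsq; rewrite /sqn in Hpsd *.
Qed.
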